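(* Let $L$ be a finite-dimensional Lie algebra over a field $F$. Then $L$ is solvable if and only if every maximal subalgebra of $L$ has an abelian ideal completion.
   Context: For a nonzero subalgebra $X$ of $L$, the strict core $k(X)$ is the sum of all ideals of $L$ that are proper subalgebras of $X$ (it is $0$ if there are none). For a maximal subalgebra $M$ of $L$, a subalgebra $C$ is a completion of $M$ if $C\not\subseteq M$ but every proper subalgebra of $C$ that is an ideal of $L$ is contained in $M$; an ideal completion is a completion that is an ideal of $L$. $M$ has an abelian ideal completion if it has an ideal completion $C$ such that the Lie algebra $C/k(C)$ is abelian. *)

(* Defs.v *)
From HB Require Import structures.
From mathcomp Require Import all_boot all_algebra.
Set Implicit Arguments. Unset Strict Implicit. Unset Printing Implicit Defensive.
Import GRing.Theory.
Local Open Scope ring_scope.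

Section Lie.
Variables (F : fieldType) (L : vectType F) (br : L -> L -> L).

Definition is_lie_bracket : Prop :=
  [/\ (forall (a : F) (x y z : L), br (a *: x + y) z = a *: br x z + br y z),
      (forall (a : F) (x y z : L), br z (a *: x + y) = a *: br z x + br z y),
      (forall x : L, br x x = 0) &
      (forall x y z : L, br x (br y z) + br y (br z x) + br z (br x y) = 0)].

(* [U, V] : the subspace spanned by all brackets [u, v], u in U, v in V
   (by bilinearity it suffices to take basis vectors) *)
Definition lie_brs (U V : {vspace L}) : {vspace L} :=
  <<[seq br u v | u <- vbasis U, v <- vbasis V]>>%VS.

Definition subalgebra (U : {vspace L}) : Prop :=
  forall u v, u \in U -> v \in U -> br u v \in U.

Definition lie_ideal (I : {vspace L}) : Prop :=
  forall x u, u \in I -> br x u \in I /\ br u x \in I.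

Definition strict_core (X K : {vspace L}) : Prop :=
  (forall I : {vspace L}, lie_ideal I -> subalgebra I -> ((I <= X)%VS /\ I != X) -> (I <= K)%VS) /\
  (forall W : {vspace L},
     (forall I : {vspace L}, lie_ideal I -> subalgebra I -> ((I <= X)%VS /\ I != X) -> (I <= W)%VS) ->
     (K <= W)%VS).

Definition maximal_subalgebra (M : {vspace L}) : Prop :=
  [/\ subalgebra M, M != fullv &
      forall S : {vspace L}, subalgebra S -> (M <= S)%VS -> S = M \/ S = fullv].

Definition completion (M C : {vspace L}) : Prop :=
  [/\ subalgebra C, ~~ (C <= M)%VS &
      forall I : {vspace L}, subalgebra I -> ((I <= C)%VS /\ I != C) -> lie_ideal I -> (I <= M)%VS].

Definition ideal_completion (M C : {vspace L}) : Prop :=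
  completion M C /\ lie_ideal C.

(* C / k(C) is abelian, i.e. [C, C] is contained in k(C) *)
Definition abelian_mod_strict_core (C : {vspace L}) : Prop :=
  exists K : {vspace L}, strict_core C K /\ (lie_brs C C <= K)%VS.

Definition has_abelian_ideal_completion (M : {vspace L}) : Prop :=
  exists C : {vspace L}, ideal_completion M C /\ abelian_mod_strict_core C.

Definition derived (n : nat) : {vspace L} :=
  iter n (fun U => lie_brs U U) fullv.

Definition lie_solvable : Prop := exists n : nat, derived n = 0%VS.

End Lie.

(* Main.v *)
Require Import Defs.
From HB Require Import structures.
From mathcomp Require Import all_boot all_algebra.
From mathcomp Require Import zify.
From Stdlib Require Import Classical.
Set Implicit Arguments. Unset Strict Implicit. Unset Printing Implicit Defensive.
Import GRing.Theory.
Local Open Scope ring_scope.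
#[local] Hint Extern 0 (@eq _ _ _) => reflexivity : core.


Section Aux.
Variables (F : fieldType) (L : vectType F).

Lemma max_dim (P : {vspace L} -> Prop) : (exists U, P U) ->
  exists U, P U /\ forall V, P V -> (\dim V <= \dim U)%N.
Proof.
move=> [U0 PU0]; apply: NNPP => H.
have step : forall U, P U -> exists V, P V /\ (\dim U < \dim V)%N.
  move=> U PU; apply: NNPP => H2; apply: H; exists U; split=> // V PV.
  rewrite leqNgt; apply/negP => lt; apply: H2; by exists V.
have chain : forall k, exists U, P U /\ (k <= \dim U)%N.
  elim=> [|k [U [PU kU]]]; first by exists U0.
  have [V [PV lt]] := step U PU; exists V; split=> //; exact: leq_ltn_trans lt.
have [U [_ ]] := chain (\dim (fullv : {vspace L})).+1.
by rewrite ltnNge dimvS // subvf.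
Qed.

Lemma min_dim (P : {vspace L} -> Prop) : (exists U, P U) ->
  exists U, P U /\ forall V, P V -> (\dim U <= \dim V)%N.
Proof.
move=> [U0 PU0].
suff : forall n, (exists U, P U /\ (\dim U <= n)%N) ->
  exists U, P U /\ forall V, P V -> (\dim U <= \dim V)%N.
  by apply; exists U0; split.
elim=> [|n IH] [U [PU dU]].
  by exists U; split=> // V _; apply: leq_trans dU _.
case: (classic (exists U, P U /\ (\dim U <= n)%N)) => [/IH//|H].
exists U; split=> // V PV; rewrite leqNgt; apply/negP => lt.
by apply: H; exists V; split=> //; rewrite -ltnS; apply: leq_trans lt dU.
Qed.

Lemma max_fam (P : {vspace L} -> Prop) : P 0%VS ->
  (forall U V, P U -> P V -> P (U + V)%VS) ->
  exists K, P K /\ forall U, P U -> (U <= K)%VS.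
Proof.
move=> P0 PD; have [K [PK Kmax]] := max_dim (ex_intro _ _ P0).
exists K; split=> // U PU.
have PUK := PD _ _ PU PK.
have /eqP E : (K == U + K)%VS by rewrite eqEdim addvSr Kmax.
by rewrite E addvSl.
Qed.

Lemma pred_vspace (Q : L -> Prop) : Q 0 ->
  (forall a x y, Q x -> Q y -> Q (a *: x + y)) ->
  exists V : {vspace L}, forall v, v \in V <-> Q v.
Proof.
move=> Q0 QL.
have P0 : forall v, v \in (0 : {vspace L})%VS -> Q v.
  by move=> v; rewrite memv0 => /eqP->.
have PD : forall U V : {vspace L}, (forall v, v \in U -> Q v) -> (forall v, v \in V -> Q v) ->
   forall v, v \in (U + V)%VS -> Q v.
  move=> U V PU PV v /memv_addP[u Uu [w Vw ->]].
  by rewrite -[u]scale1r; apply: QL; [apply: PU|apply: PV].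
have [K [PK Kmax]] := max_fam P0 PD.
exists K => v; split; first exact: PK.
move=> Qv; have : (<[v]> <= K)%VS.
  apply: Kmax => w /vlineP[k ->]; rewrite -[_ *: v]addr0; exact: QL.
by move/subvP; apply; apply: memv_line.
Qed.

Lemma not_subv (U W : {vspace L}) : ~ (U <= W)%VS -> exists2 u, u \in U & u \notin W.
Proof.
move=> H; apply: NNPP => H2; apply: H; apply/subvP => u Uu.
apply: NNPP => nW; apply: H2; exists u => //; exact/negP.
Qed.

Lemma proper_dim (U V : {vspace L}) : (U <= V)%VS -> U != V -> (\dim U < \dim V)%N.
Proof.
move=> UV nUV; rewrite ltnNge; apply/negP => le; move/negP: nUV; apply.
by rewrite eqEdim UV le.
Qed.

Lemma span_ind (U : {vspace L}) (Q : L -> Prop) : Q 0 ->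
  (forall a x y, Q x -> Q y -> Q (a *: x + y)) ->
  (forall u, u \in vbasis U -> Q u) -> forall u, u \in U -> Q u.
Proof.
move=> Q0 QL Qb; have [V HV] := pred_vspace Q0 QL.
have : (U <= V)%VS.
  rewrite -(span_basis (vbasisP U)); apply/span_subvP => u ub; apply/HV; exact: Qb.
by move/subvP => sUV u /sUV/HV.
Qed.

End Aux.


Section Br.
Variables (F : fieldType) (L : vectType F) (br : L -> L -> L).
Hypothesis hbr : is_lie_bracket br.

Lemma brLl a x y z : br (a *: x + y) z = a *: br x z + br y z.
Proof. by case: hbr. Qed.
Lemma brLr a x y z : br z (a *: x + y) = a *: br z x + br z y.
Proof. by case: hbr. Qed.
Lemma brxx x : br x x = 0. Proof. by case: hbr. Qed.
Lemma jacobi0 x y z : br x (br y z) + br y (br z x) + br z (br x y) = 0.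
Proof. by case: hbr. Qed.

Lemma brDl x y z : br (x + y) z = br x z + br y z.
Proof. by rewrite -[x]scale1r brLl !scale1r; reflexivity. Qed.
Lemma brDr x y z : br z (x + y) = br z x + br z y.
Proof. by rewrite -[x]scale1r brLr !scale1r; reflexivity. Qed.
Lemma br0l z : br 0 z = 0.
Proof. have H := brDl 0 0 z; rewrite addr0 in H; apply: (@addrI _ (br 0 z)); by rewrite addr0 -H. Qed.
Lemma br0r z : br z 0 = 0.
Proof. have H := brDr 0 0 z; rewrite addr0 in H; apply: (@addrI _ (br z 0)); by rewrite addr0 -H. Qed.
Lemma brZl a x z : br (a *: x) z = a *: br x z.
Proof. by rewrite -[a *: x]addr0 brLl br0l addr0. Qed.
Lemma brZr a x z : br z (a *: x) = a *: br z x.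
Proof. by rewrite -[a *: x]addr0 brLr br0r addr0. Qed.
Lemma brNl x z : br (- x) z = - br x z.
Proof. by rewrite -scaleN1r brZl scaleN1r. Qed.
Lemma brNr x z : br z (- x) = - br z x.
Proof. by rewrite -scaleN1r brZr scaleN1r. Qed.
Lemma brBl x y z : br (x - y) z = br x z - br y z.
Proof. by rewrite brDl brNl. Qed.
Lemma brBr x y z : br z (x - y) = br z x - br z y.
Proof. by rewrite brDr brNr. Qed.
Lemma br_anti x y : br x y = - br y x.
Proof.
apply/eqP; rewrite -subr_eq0 opprK.
by have := brxx (x + y); rewrite brDl !brDr !brxx add0r addr0 => ->.
Qed.
Lemma jacobi x y z : br x (br y z) = br (br x y) z + br y (br x z).
Proof.
rewrite (br_anti (br x y)) (br_anti x z) brNr.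
apply: (@addIr _ (br y (br z x) + br z (br x y))).
rewrite addrA jacobi0 addrC (addrC (br y _)) addrACA !subrr addr0; reflexivity.
Qed.

Lemma iter_lin n x a y z :
  iter n (br x) (a *: y + z) = a *: iter n (br x) y + iter n (br x) z.
Proof. by elim: n => //= n ->; rewrite brLr. Qed.
Lemma itb0 n x : iter n (br x) 0 = 0.
Proof. by elim: n => //= n ->; rewrite br0r. Qed.
Lemma itbD n x y z : iter n (br x) (y + z) = iter n (br x) y + iter n (br x) z.
Proof. by rewrite -[y]scale1r iter_lin !scale1r. Qed.
Lemma itbN n x y : iter n (br x) (- y) = - iter n (br x) y.
Proof. by apply/eqP; rewrite -addr_eq0 -itbD addrC subrr itb0. Qed.
Lemma itbB n x y z : iter n (br x) (y - z) = iter n (br x) y - iter n (br x) z.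
Proof. by rewrite itbD itbN. Qed.

Lemma mem_brs (U V : {vspace L}) u v : u \in U -> v \in V -> br u v \in lie_brs br U V.
Proof.
move=> Uu Vv.
have H1 : forall v, v \in vbasis V -> forall u, u \in U -> br u v \in lie_brs br U V.
  move=> v0 vb; apply: span_ind.
  - by rewrite br0l mem0v.
  - by move=> a x y Hx Hy; rewrite brLl memvD // memvZ.
  - by move=> u0 ub; apply: memv_span; apply: allpairs_f.
move: v Vv; apply: span_ind.
- by rewrite br0r mem0v.
- by move=> a x y Hx Hy; rewrite brLr memvD // memvZ.
- by move=> v0 vb; apply: H1.
Qed.

Lemma brs_sub (U V W : {vspace L}) : (forall u v, u \in U -> v \in V -> br u v \in W) ->
  (lie_brs br U V <= W)%VS.
Proof.
move=> H; apply/span_subvP => w /allpairsP[[u v] [/= ub vb ->]].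
by apply: H; apply: vbasis_mem.
Qed.

Lemma brs_mono (U U' V V' : {vspace L}) : (U <= U')%VS -> (V <= V')%VS ->
  (lie_brs br U V <= lie_brs br U' V')%VS.
Proof.
move=> /subvP sU /subvP sV; apply: brs_sub => u v Uu Vv.
by apply: mem_brs; [apply: sU|apply: sV].
Qed.

Lemma brs_ind (U V : {vspace L}) (Q : L -> Prop) : Q 0 ->
  (forall a x y, Q x -> Q y -> Q (a *: x + y)) ->
  (forall u v, u \in U -> v \in V -> Q (br u v)) ->
  forall w, w \in lie_brs br U V -> Q w.
Proof.
move=> Q0 QL H; have [Z HZ] := pred_vspace Q0 QL.
have /subvP S : (lie_brs br U V <= Z)%VS by apply: brs_sub => u v Uu Vv; apply/HZ; apply: H.
by move=> w /S/HZ.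
Qed.

Lemma ideal_sub (I : {vspace L}) : lie_ideal br I -> subalgebra br I.
Proof. by move=> HI u v Uu Vv; case: (HI u v Vv). Qed.

Lemma idealP (I : {vspace L}) : (forall x u, u \in I -> br x u \in I) -> lie_ideal br I.
Proof. by move=> H x u Iu; split; [apply: H|rewrite br_anti memvN; apply: H]. Qed.

Lemma ideal_brs (I J : {vspace L}) : lie_ideal br I -> lie_ideal br J -> lie_ideal br (lie_brs br I J).
Proof.
move=> HI HJ; apply: idealP => x; apply: brs_ind.
- by rewrite br0r mem0v.
- by move=> a y z Hy Hz; rewrite brLr memvD // memvZ.
- move=> u v Iu Jv; rewrite jacobi memvD //; apply: mem_brs => //.
  + by case: (HI x u Iu).
  + by case: (HJ x v Jv).
Qed.

Lemma ideal_add (I J : {vspace L}) : lie_ideal br I -> lie_ideal br J -> lie_ideal br (I + J)%VS.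
Proof.
move=> HI HJ; apply: idealP => x w /memv_addP[u Iu [v Jv ->]].
rewrite brDr; apply: memv_add; [by case: (HI x u Iu)|by case: (HJ x v Jv)].
Qed.

Lemma ideal_cap (I J : {vspace L}) : lie_ideal br I -> lie_ideal br J -> lie_ideal br (I :&: J)%VS.
Proof.
move=> HI HJ; apply: idealP => x w; rewrite !memv_cap => /andP[Iw Jw].
by apply/andP; split; [case: (HI x w Iw)|case: (HJ x w Jw)].
Qed.

Lemma idealf : lie_ideal br fullv.
Proof. by apply: idealP => x u _; apply: memvf. Qed.

Lemma subalg_add (S A : {vspace L}) : subalgebra br S -> lie_ideal br A -> subalgebra br (S + A)%VS.
Proof.
move=> HS HA u v /memv_addP[s Ss [a Aa ->]] /memv_addP[s' Ss' [a' Aa' ->]].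
rewrite brDl !brDr -addrA; apply: memv_add; first exact: HS.
rewrite memvD //; first by case: (HA s a' Aa').
rewrite memvD //; first by case: (HA s' a Aa).
by case: (HA a a' Aa').
Qed.

End Br.


Section Fwd.
Variables (F : fieldType) (L : vectType F) (br : L -> L -> L).
Hypothesis hbr : is_lie_bracket br.

Lemma derivedS n : derived br n.+1 = lie_brs br (derived br n) (derived br n).
Proof. by []. Qed.

Lemma derived_shift k n : (derived br (k + n) <= derived br k)%VS.
Proof.
elim: k => [|k IH]; first exact: subvf.
by rewrite addSn !derivedS; apply: brs_mono.
Qed.

Lemma ideal0 : lie_ideal br (0 : {vspace L})%VS.
Proof. by apply: (idealP hbr) => x u; rewrite memv0 => /eqP->; rewrite (br0r hbr) mem0v. Qed.

Lemma fullv_not_sub (M : {vspace L}) : M != fullv -> ~ (fullv <= M)%VS.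
Proof. by move=> /negP H sfM; apply: H; rewrite eqEsubv sfM subvf. Qed.

Lemma forward : lie_solvable br ->
  forall M : {vspace L}, maximal_subalgebra br M -> has_abelian_ideal_completion br M.
Proof.
move=> [n Hn] M [Msub Mne Mmax].
have [C [[Cid CnM] Cmin]] := @min_dim _ _ (fun C => lie_ideal br C /\ ~ (C <= M)%VS)
   (ex_intro _ fullv (conj (idealf hbr) (fullv_not_sub Mne))).
have small : forall I, lie_ideal br I -> (I <= C)%VS -> I != C -> (I <= M)%VS.
  move=> I HI IC IneC; apply: NNPP => nIM.
  have := Cmin I (conj HI nIM); rewrite leqNgt; move/negP; apply.
  exact: proper_dim.
have P0 : (fun K => [/\ lie_ideal br K, (K <= C)%VS & K != C]) 0%VS.
  split; [exact: ideal0|exact: sub0v|].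
  apply/eqP => C0; apply: CnM; rewrite -C0; exact: sub0v.
have PD : forall U V, (fun K => [/\ lie_ideal br K, (K <= C)%VS & K != C]) U ->
    (fun K => [/\ lie_ideal br K, (K <= C)%VS & K != C]) V ->
    (fun K => [/\ lie_ideal br K, (K <= C)%VS & K != C]) (U + V)%VS.
  move=> U V [HU UC UnC] [HV VC VnC]; split; first exact: ideal_add.
    by rewrite subv_add UC VC.
  apply/eqP => E; apply: CnM; rewrite -E subv_add.
  by rewrite (small _ HU UC UnC) (small _ HV VC VnC).
have [K [[Kid KC KnC] Kmax]] := max_fam P0 PD.
exists C; split.
  split=> //; split; first exact: ideal_sub.
  - exact/negP.
  - by move=> I _ [IC InC] HI; apply: small.
exists K; split.
  split.
    by move=> I HI _ [IC InC]; apply: Kmax.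
  by move=> W HW; apply: HW => //; exact: ideal_sub.
apply: Kmax; split.
- exact: ideal_brs.
- by apply: brs_sub => u v _ Cv; case: (Cid u v Cv).
- apply/eqP => E; apply: CnM.
  have : forall m, (C <= derived br m)%VS.
    elim=> [|m IH]; first exact: subvf.
    by rewrite derivedS -E; apply: brs_mono.
  by move/(_ n); rewrite Hn => /subv_trans; apply; apply: sub0v.
Qed.

End Fwd.


Lemma last_false (p : nat -> bool) k : ~~ p 0 -> p k -> exists j, ~~ p j /\ p j.+1.
Proof.
move=> p0; elim: k => [|k IH] pk; first by rewrite pk in p0.
case pk': (p k); first exact: IH.
by exists k; rewrite pk'.
Qed.

Section Engel.
Variables (F : fieldType) (L : vectType F) (br : L -> L -> L).
Hypothesis hbr : is_lie_bracket br.
Variable A : {vspace L}.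
Hypothesis HA : lie_ideal br A.

Lemma engel n : forall S : {vspace L}, (\dim S < n)%N -> subalgebra br S -> (A <= S)%VS ->
  (forall s, s \in S -> forall y, exists k, iter k (br s) y \in A) ->
  forall U W : {vspace L}, (W <= U)%VS -> ~ (U <= W)%VS -> (A <= W)%VS ->
  (forall s u, s \in S -> u \in U -> br s u \in U) ->
  (forall s w, s \in S -> w \in W -> br s w \in W) ->
  exists u, [/\ u \in U, u \notin W & forall s, s \in S -> br s u \in W].
Proof.
elim: n => [|n IH] S dS Ssub AS Snil U W WU nUW AW SU SW; first by [].
case: (classic (S <= A)%VS) => [SA|nSA].
  have [u Uu nWu] := not_subv nUW.
  exists u; split=> // s Ss; apply: (subvP AW).
  by case: (@HA u s (subvP SA s Ss)).
pose P T := [/\ subalgebra br T, (A <= T)%VS, (T <= S)%VS & T != S].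
have PA : P A.
  split=> //; first exact: ideal_sub.
  by apply/eqP => E; apply: nSA; rewrite E.
have [T [[Tsub AT TS TnS] Tmax]] := max_dim (ex_intro P A PA).
have dT : (\dim T < n)%N.
  by apply: leq_trans (proper_dim TS TnS) _; rewrite -ltnS.
have Tnil : forall s, s \in T -> forall y, exists k, iter k (br s) y \in A.
  by move=> s Ts; apply: Snil; apply: (subvP TS s Ts).
have nST : ~ (S <= T)%VS.
  by move=> ST; move/negP: TnS; apply; rewrite eqEsubv TS ST.
have [s0 [Ss0 nTs0 Ts0]] := IH T dT Tsub AT Tnil S T TS nST AT
   (fun s u Ts Su => Ssub s u (subvP TS s Ts) Su) (fun s u Ts Tu => Tsub s u Ts Tu).
pose T' := (T + <[s0]>)%VS.
have T'sub : subalgebra br T'.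
  move=> u v /memv_addP[t Tt [x /vlineP[c ->] ->]] /memv_addP[t' Tt' [x' /vlineP[c' ->] ->]].
  apply: (subvP (addvSl T <[s0]>)).
  rewrite (brDl hbr) !(brDr hbr) !(brZl hbr) !(brZr hbr) (brxx hbr) !scaler0 addr0.
  rewrite memvD //; first by rewrite memvD // ?Tsub // memvZ // Ts0.
  by rewrite memvZ // (br_anti hbr) memvN Ts0.
have T'S : T' = S.
  case: (eqVneq T' S) => // T'nS; exfalso.
  have PT' : P T'.
    split=> //; first by apply: subv_trans (addvSl _ _).
    by rewrite subv_add TS -memvE.
  have := Tmax T' PT'; rewrite leqNgt; move/negP; apply; apply: proper_dim.
    exact: addvSl.
  by apply/eqP => E; move/negP: nTs0; apply; rewrite E; apply: (subvP (addvSr T <[s0]>)); exact: memv_line.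
have Tnil' : forall s, s \in T -> forall y, exists k, iter k (br s) y \in A by [].
have [v [Uv nWv Tv]] := IH T dT Tsub AT Tnil U W WU nUW AW
   (fun s u Ts Uu => SU s u (subvP TS s Ts) Uu) (fun s u Ts Wu => SW s u (subvP TS s Ts) Wu).
have inv : forall k, iter k (br s0) v \in U /\ forall t, t \in T -> br t (iter k (br s0) v) \in W.
  elim=> [|k [IU IT]] //=; split; first exact: SU.
  move=> t Tt; rewrite (jacobi hbr) memvD //; first by apply: IT; apply: Ts0.
  by apply: SW => //; apply: IT.
have [k Ak] := Snil s0 Ss0 v.
have [j [nWj Wj1]] := @last_false (fun k => iter k (br s0) v \in W) k nWv (subvP AW _ Ak).
exists (iter j (br s0) v); have [IU IT] := inv j; split=> // s.
rewrite -T'S => /memv_addP[t Tt [x /vlineP[c ->] ->]].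
by rewrite (brDl hbr) (brZl hbr) memvD ?memvZ // IT.
Qed.

End Engel.


Section Bwd.
Variables (F : fieldType) (L : vectType F) (br : L -> L -> L).
Hypothesis hbr : is_lie_bracket br.

Lemma max_exists (S : {vspace L}) : subalgebra br S -> S != fullv ->
  exists M, maximal_subalgebra br M /\ (S <= M)%VS.
Proof.
move=> HS SnF.
pose P M := [/\ subalgebra br M, (S <= M)%VS & M != fullv].
have [M [[HM SM MnF] Mmax]] := max_dim (ex_intro P S (And3 HS (subvv S) SnF)).
exists M; split=> //; split=> // S' HS' MS'.
case: (eqVneq S' fullv) => [->|S'nF]; first by right.
left; have := Mmax S' (And3 HS' (subv_trans SM MS') S'nF) => le.
by apply/esym/eqP; rewrite eqEdim MS' le.
Qed.

Lemma ideal_iter (A : {vspace L}) x a : lie_ideal br A -> a \in A ->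
  forall k, iter k (br x) a \in A.
Proof. by move=> HA Aa; elim=> //= k IH; case: (HA x _ IH). Qed.

Lemma fitting x : exists N, forall y, exists w,
  iter N.+1 (br x) y = iter (N.+1 + N.+1) (br x) w.
Proof.
pose Im k y := exists w, y = iter k (br x) w.
have Im0 : forall k, Im k 0 by move=> k; exists 0; rewrite itb0.
have ImL : forall k a y z, Im k y -> Im k z -> Im k (a *: y + z).
  by move=> k a y z [w1 ->] [w2 ->]; exists (a *: w1 + w2); rewrite iter_lin.
have step1 : exists N, forall y, exists w, iter N (br x) y = iter N.+1 (br x) w.
  apply: NNPP => H.
  have H' : forall N, exists y, forall w, iter N (br x) y <> iter N.+1 (br x) w.
    move=> N; apply: NNPP => H2; apply: H; exists N => y; apply: NNPP => H3; apply: H2.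
    by exists y => w E; apply: H3; exists w.
  have claim : forall k (V : {vspace L}), (forall y, y \in V <-> Im k y) ->
      (\dim V + k <= \dim (fullv : {vspace L}))%N.
    elim=> [|k IH] V HV; first by rewrite addn0 dimvS // subvf.
    have [V0 HV0] := pred_vspace (Im0 k) (ImL k).
    have sub : (V <= V0)%VS.
      apply/subvP => y /HV[w ->]; apply/HV0; exists (br x w); exact: iterSr.
    have [y0 Hy0] := H' k.
    have neq : V != V0.
      apply/eqP => E; have : iter k (br x) y0 \in V0 by apply/HV0; exists y0.
      by rewrite -E => /HV[w Ew]; apply: (Hy0 w).
    have := IH V0 HV0; have := proper_dim sub neq; rewrite addnS; lia.
  have [V HV] := pred_vspace (Im0 (\dim (fullv : {vspace L})).+1) (ImL _).
  by have := claim _ V HV; lia.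
have [N HN] := step1.
have HN1 : forall y, exists w, iter N.+1 (br x) y = iter N.+2 (br x) w.
  by move=> y; have [w Hw] := HN y; exists w; rewrite iterS Hw.
have prop : forall M, (forall y, exists w, iter M (br x) y = iter M.+1 (br x) w) ->
    forall j y, exists w, iter M (br x) y = iter (j + M) (br x) w.
  move=> M HM; elim=> [|j IH] y; first by exists y.
  have [w Hw] := IH y; have [w' Hw'] := HM w.
  by exists w'; rewrite Hw iterD Hw' -iterD addSnnS.
by exists N => y; apply: (prop _ HN1).
Qed.

Lemma nil_br x : forall n a b y z, (a + b)%N = n -> iter a (br x) y = 0 -> iter b (br x) z = 0 ->
  iter n (br x) (br y z) = 0.
Proof.
move=> n; elim: n => [|n IH] a b y z E Ey Ez.
  by case: a E Ey => //= E Ey; rewrite Ey (br0l hbr).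
case: a E Ey => [|a] E Ey.
  by rewrite /= in Ey; rewrite Ey (br0l hbr) itb0.
case: b E Ez => [|b] E Ez.
  by rewrite /= in Ez; rewrite Ez (br0r hbr) itb0.
rewrite iterSr (jacobi hbr) (itbD hbr); rewrite addSn in E; case: E => E.
have Ey' := Ey; have Ez' := Ez; rewrite iterSr in Ey'; rewrite iterSr in Ez'.
rewrite (IH a b.+1 (br x y) z E Ey' Ez) (IH a.+1 b y (br x z) _ Ey Ez') ?addr0 //.
by rewrite addSn -addnS.
Qed.


Lemma hypA (A M : {vspace L}) : has_abelian_ideal_completion br M ->
  lie_ideal br A -> (A <= M)%VS ->
  exists C, [/\ lie_ideal br C, (A <= C)%VS, ~ (C <= M)%VS, (lie_brs br C C <= M)%VS &
     forall J, lie_ideal br J -> (A <= J)%VS -> (J <= C)%VS -> J != C -> (J <= M)%VS].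
Proof.
move=> [C0 [[[C0sub nC0M C0small] C0id] [K [[K1 K2] CCK]]]] HA AM.
have KM : (K <= M)%VS.
  by apply: K2 => I Iid Isub [IC InC]; apply: C0small.
have HAe : forall x a, a \in A -> br x a \in A /\ br a x \in A by [].
exists (C0 + A)%VS; split.
- exact: ideal_add.
- exact: addvSr.
- by move=> H; move/negP: nC0M; apply; apply: subv_trans H; apply: addvSl.
- apply: brs_sub => u v /memv_addP[c Cc [a Aa ->]] /memv_addP[c' Cc' [a' Aa' ->]].
  have AMs := subvP AM.
  rewrite (brDl hbr) !(brDr hbr) -addrA memvD //.
    by apply: (subvP KM); apply: (subvP CCK); apply: mem_brs.
  rewrite memvD //; first by apply: AMs; case: (HAe c a' Aa').
  by rewrite memvD //; apply: AMs; [case: (HAe c' a Aa)|case: (HAe a a' Aa')].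
- move=> J HJ AJ JC JnC.
  have IC0 : (J :&: C0 <= M)%VS.
    have HI := ideal_cap hbr HJ C0id.
    apply: (C0small _ (ideal_sub HI) _ HI); split; first exact: capvSr.
    apply/eqP => E; move/negP: JnC; apply; rewrite eqEsubv JC subv_add.
    by rewrite AJ -E capvSl.
  apply/subvP => y Jy; have /memv_addP[c Cc [a Aa Ey]] := subvP JC y Jy.
  have cE : c = y - a by rewrite Ey addrK.
  have Jc : c \in J by rewrite cE memvB // (subvP AJ).
  rewrite Ey memvD //; last exact: (subvP AM).
  by apply: (subvP IC0); rewrite memv_cap Jc Cc.
Qed.

Hypothesis Hyp : forall M : {vspace L}, maximal_subalgebra br M -> has_abelian_ideal_completion br M.

Lemma main m : forall A : {vspace L}, lie_ideal br A ->
  (\dim (fullv : {vspace L}) - \dim A <= m)%N -> exists n, (derived br n <= A)%VS.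
Proof.
elim: m => [|m IHm] A HA dA.
  exists 0%N; have : A == fullv by rewrite eqEdim subvf -subn_eq0 -leqn0.
  by move/eqP->; exact: subvv.
apply: NNPP => Hno.
have nFA : ~ (fullv <= A)%VS by move=> H; apply: Hno; exists 0%N.
have IHA : forall J, lie_ideal br J -> (A <= J)%VS -> J != A -> exists n, (derived br n <= J)%VS.
  move=> J HJ AJ JnA; apply: IHm => //.
  have AnJ : A != J by rewrite eq_sym.
  have := proper_dim AJ AnJ.
  have := dimvS (subvf J); lia.
pose PB J := [/\ lie_ideal br J, (A <= J)%VS & J != A].
have PBf : PB fullv.
  split; [exact: idealf | exact: subvf|].
  by apply/eqP => E; apply: nFA; rewrite E subvv.
have [B [[Bid AB BnA] Bmin]] := min_dim (ex_intro PB fullv PBf).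
have uniq : forall J, lie_ideal br J -> (A <= J)%VS -> J != A -> (B <= J)%VS.
  move=> J HJ AJ JnA.
  case: (eqVneq (B :&: J)%VS A) => [E|InA].
    exfalso; have [nB HnB] := IHA B Bid AB BnA; have [nJ HnJ] := IHA J HJ AJ JnA.
    apply: Hno; exists (nB + nJ)%N; rewrite -E subv_cap; apply/andP; split.
      exact: subv_trans (derived_shift hbr nB nJ) HnB.
    by rewrite addnC; exact: subv_trans (derived_shift hbr nJ nB) HnJ.
  have PI : PB (B :&: J)%VS by split; [exact: ideal_cap | rewrite subv_cap AB AJ |].
  have := Bmin _ PI => le.
  have : (B :&: J)%VS == B by rewrite eqEdim capvSl le.
  by move/eqP => <-; exact: capvSr.
have [nB HnB] := IHA B Bid AB BnA.
have perf : (B <= lie_brs br B B + A)%VS.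
  case: (eqVneq (lie_brs br B B + A)%VS A) => [E|JnA].
    exfalso; apply: Hno; exists nB.+1; rewrite derivedS.
    apply: subv_trans (brs_mono hbr HnB HnB) _; rewrite -E; exact: addvSl.
  exact: uniq (ideal_add hbr (ideal_brs hbr Bid Bid) HA) (addvSr _ _) JnA.
have BsubA : ~ (B <= A)%VS.
  by move=> BA; move/negP: BnA; apply; rewrite eqEsubv BA AB.
case: (classic (exists M, [/\ maximal_subalgebra br M, (A <= M)%VS & ~ (B <= M)%VS])).
  move=> [M [HM AM nBM]].
  have [C [Cid AC nCM CCM Csmall]] := hypA (Hyp HM) HA AM.
  have CnA : C != A by apply/eqP => E; apply: nCM; rewrite E.
  have BC := uniq C Cid AC CnA.
  case: (eqVneq B C) => [E|BnC]; last by apply: nBM; apply: Csmall.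
  apply: nBM; apply: subv_trans perf _; rewrite subv_add AM andbT -E in CCM *.
  by rewrite CCM.
move=> Hfr.
have Hfr' : forall M, maximal_subalgebra br M -> (A <= M)%VS -> (B <= M)%VS.
  move=> M HM AM; apply: NNPP => nBM; apply: Hfr; by exists M.
have nil : forall s, s \in B -> forall y, exists k, iter k (br s) y \in A.
  move=> x Bx.
  pose Nl y := exists k, iter k (br x) y = 0.
  have Nl0 : Nl 0 by exists 0%N.
  have NlL : forall a y z, Nl y -> Nl z -> Nl (a *: y + z).
    move=> a y z [k1 E1] [k2 E2]; exists (k1 + k2)%N.
    have h1 : iter (k1 + k2) (br x) y = 0 by rewrite addnC iterD E1 (itb0 hbr).
    have h2 : iter (k1 + k2) (br x) z = 0 by rewrite iterD E2 (itb0 hbr).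
    by rewrite (iter_lin hbr) h1 h2 scaler0 addr0.
  have [K0 HK0] := pred_vspace Nl0 NlL.
  have K0sub : subalgebra br K0.
    move=> u v /HK0[a Ea] /HK0[b Eb]; apply/HK0; exists (a + b)%N.
    by rewrite (nil_br (erefl (a + b)%N) Ea Eb).
  have Ssub := subalg_add hbr K0sub HA.
  have SF : (fullv <= K0 + A)%VS.
    apply: NNPP => nSF.
    have SnF : (K0 + A)%VS != fullv by apply/eqP => E; apply: nSF; rewrite E subvv.
    have [M [HM SM]] := max_exists Ssub SnF.
    have AM : (A <= M)%VS by apply: subv_trans SM; exact: addvSr.
    have BM := Hfr' M HM AM.
    case: HM => _ /negP MnF _; apply: MnF; rewrite eqEsubv subvf /=.
    apply/subvP => y _.
    have [N HN] := fitting x.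
    have [w Hw] := HN y.
    pose b := iter N.+1 (br x) w.
    have Bb : b \in B by rewrite /b iterS; case: (Bid (iter N (br x) w) x Bx).
    have Ky : y - b \in K0.
      apply/HK0; exists N.+1; rewrite (itbB hbr) Hw /b iterD subrr //.
    rewrite -(subrK b y) memvD //; last exact: (subvP BM).
    by apply: (subvP SM); apply: (subvP (addvSl K0 A)).
  move=> y; have /memv_addP[y0 /HK0[k Ek] [a Aa ->]] := subvP SF y (memvf y).
  by exists k; rewrite (itbD hbr) Ek add0r; apply: ideal_iter.
have BBsub : forall s u, s \in B -> u \in B -> br s u \in B.
  by move=> s u _ Bu; case: (Bid s u Bu).
have [u [Bu nAu Hu]] := engel hbr HA (ltnSn (\dim B)) (ideal_sub Bid) AB nil AB BsubA (subvv A)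
   BBsub (fun s w _ Aw => proj1 (HA s w Aw)).
pose Q z := z \in B /\ forall b, b \in B -> br b z \in A.
have Q0 : Q 0 by split; [exact: mem0v | move=> b _; rewrite (br0r hbr) mem0v].
have QL : forall a y z, Q y -> Q z -> Q (a *: y + z).
  move=> a y z [By Hy] [Bz Hz]; split; first by rewrite memvD // memvZ.
  by move=> b Bb; rewrite (brLr hbr) memvD // ?memvZ // ?Hy ?Hz.
have [Z HZ] := pred_vspace Q0 QL.
have Zid : lie_ideal br Z.
  apply: (idealP hbr) => x z /HZ[Bz Hz]; apply/HZ; split.
    by case: (Bid x z Bz).
  move=> b Bb; rewrite (jacobi hbr) memvD //; last by case: (HA x _ (Hz b Bb)).
  by apply: Hz; case: (Bid x b Bb).
have AZ : (A <= Z)%VS.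
  apply/subvP => a Aa; apply/HZ; split; first exact: (subvP AB).
  by move=> b _; case: (HA b a Aa).
have ZnA : Z != A.
  apply/eqP => E; move/negP: nAu; apply; rewrite -E; apply/HZ; split=> //.
have BZ := uniq Z Zid AZ ZnA.
have BBA : (lie_brs br B B <= A)%VS.
  apply: brs_sub => v v' Bv Bv'.
  by have /HZ[_ H] := subvP BZ v' Bv'; apply: H.
by apply: BsubA; apply: subv_trans perf _; rewrite subv_add BBA subvv.
Qed.

End Bwd.

Unset Implicit Arguments.
Local Close Scope ring_scope.

Theorem theorem2p10 (F : fieldType) (L : vectType F) (br : L -> L -> L)
  (hbr : is_lie_bracket br) :
  lie_solvable br <->
  (forall M : {vspace L}, maximal_subalgebra br M -> has_abelian_ideal_completion br M).
Proof.
split; first exact: (forward hbr).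
move=> H.
have [n Hn] := main hbr H (ideal0 hbr) (leqnn (\dim (fullv : {vspace L}) - \dim (0 : {vspace L})%VS)).
by exists n; apply/eqP; rewrite -subv0.
Qed.
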